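(* For each $k > 0$ there is a comonad in Kleisli form $(\mathbb{H}_{k}, \varepsilon, (\cdot)^* )$ on $\mathsf{HGraph}$, given by restricting focussed plays to hyperedges of size at most $k$.
   Context: $\mathsf{HGraph}$ is the category of hypergraphs $(V,E)$ ($E$ a family of finite subsets of $V$) and maps sending hyperedges to hyperedges. The hypergraph comonad $\mathbb{H}$: vertices of $\mathbb{H}(V,E)$ are equivalence classes $[p,a]$ of focussed plays $\langle p,a\rangle$ ($p=[U_1,\ldots,U_n]$ a non-empty list of hyperedges, $a\in U_n$), where $\langle p,a\rangle\sim\langle q,a'\rangle$ iff $a=a'$, $p\sqcap q$ non-empty, and $a$ lies in the last hyperedge of every play on the prefix-order paths from $p\sqcap q$ to $p$ and $q$; hyperedges are $\{[p,a]\mid a\in U\}$ with $U\in E$ the last element of $p$. Counit $\varepsilon([p,a])=a$; coextension $h^*([[U_1,\ldots,U_n],a])=[[V_1,\ldots,V_n],h([[U_1,\ldots,U_n],a])]$ with $V_j=\{h([[U_1,\ldots,U_j],b])\mid b\in U_j\}$. *)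

(* Defs.v *)
From Stdlib Require Import List Arith ClassicalEpsilon.
Import ListNotations.


(* A hypergraph (V,E): a vertex type and a family E of subsets of V
   (subsets are predicates; with functional/propositional extensionality
   extensional equality of subsets is Leibniz equality).
   Finiteness of hyperedges is the separate predicate [finite_edges]. *)
Record hgraph := HGraph { hV : Type ; hE : (hV -> Prop) -> Prop }.

Definition finite_subset {V : Type} (U : V -> Prop) : Prop :=
  exists l : list V, forall x, U x <-> In x l.

Definition atmost {V : Type} (k : nat) (U : V -> Prop) : Prop :=
  exists l : list V, length l <= k /\ forall x, U x <-> In x l.

Definition finite_edges (G : hgraph) : Prop :=
  forall U, hE G U -> finite_subset U.

Definition image {A B : Type} (f : A -> B) (U : A -> Prop) : B -> Prop :=
  fun y => exists x, U x /\ f x = y.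

Definition is_hom (G H : hgraph) (f : hV G -> hV H) : Prop :=
  forall U, hE G U -> hE H (image f U).

Section Plays.
Variable G : hgraph.

Definition play : Type := (list (hV G -> Prop) * hV G)%type.

Definition dE : hV G -> Prop := fun _ => False.

Definition valid_list (k : nat) (p : list (hV G -> Prop)) : Prop :=
  p <> [] /\ forall U, In U p -> hE G U /\ atmost k U.

Definition valid_play (k : nat) (x : play) : Prop :=
  valid_list k (fst x) /\ last (fst x) dE (snd x).

(* <p,a> ~ <q,a'>: a = a', p ⊓ q (longest common prefix, of length m) is
   non-empty, and a lies in the last hyperedge of every prefix r of p
   (resp. q) with p ⊓ q <= r, i.e. in the hyperedges at (0-based) indices
   m-1, ..., length-1. *)
Definition feq (x y : play) : Prop :=
  let (p, a) := x in let (q, a') := y in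
  a = a' /\
  exists m : nat,
    1 <= m /\ m <= length p /\ m <= length q /\
    firstn m p = firstn m q /\
    (m = length p \/ m = length q \/ nth m p dE <> nth m q dE) /\
    (forall j, m - 1 <= j < length p -> nth j p dE a) /\
    (forall j, m - 1 <= j < length q -> nth j q dE a).

Definition cls (k : nat) (x : play) : play -> Prop :=
  fun y => valid_play k y /\ feq x y.

Definition Hvert (k : nat) : Type :=
  { C : play -> Prop | exists x, valid_play k x /\ C = cls k x }.

Definition mkv (k : nat) (x : play) (Hx : valid_play k x) : Hvert k :=
  exist _ (cls k x) (ex_intro _ x (conj Hx eq_refl)).

Definition Hedge (k : nat) (S : Hvert k -> Prop) : Prop :=
  exists p, valid_list k p /\
    S = (fun v => exists a, last p dE a /\ proj1_sig v = cls k (p, a)).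

End Plays.

Definition Hk (k : nat) (G : hgraph) : hgraph :=
  @HGraph (Hvert G k) (@Hedge G k).

Definition vrepr (k : nat) (G : hgraph) (v : hV (Hk k G)) : play G :=
  proj1_sig (constructive_indefinite_description _ (proj2_sig v)).

Definition eps (k : nat) (G : hgraph) (v : hV (Hk k G)) : hV G :=
  snd (vrepr k G v).

(** Coextension on a representative:
    <[U1..Un],a> |-> <[V1..Vn], h([[U1..Un],a])>,
    V_j = { h([[U1..Uj],b]) | b in U_j } *)
Definition lift_list (k : nat) (G G' : hgraph) (h : hV (Hk k G) -> hV G')
  (p : list (hV G -> Prop)) : list (hV G' -> Prop) :=
  map (fun j => fun y : hV G' =>
         exists b (Hb : valid_play G k (firstn (S j) p, b)),
           nth j p (dE G) b /\ y = h (mkv G k _ Hb))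
      (seq 0 (length p)).

Definition lift (k : nat) (G G' : hgraph) (h : hV (Hk k G) -> hV G')
  (x : play G) (Hx : valid_play G k x) : play G' :=
  (lift_list k G G' h (fst x), h (mkv G k x Hx)).

(* hs is the coextension h^* : for every focussed k-play <p,a>,
   h^*([p,a]) = [lift of <p,a>]  (this also expresses well-definedness) *)
Definition coext_spec (k : nat) (G G' : hgraph) (h : hV (Hk k G) -> hV G')
  (hs : hV (Hk k G) -> hV (Hk k G')) : Prop :=
  forall (x : play G) (Hx : valid_play G k x),
    proj1_sig (hs (mkv G k x Hx)) = cls G' k (lift k G G' h x Hx).

(* Main.v *)
Require Import Defs.
From Stdlib Require Import List Arith ClassicalEpsilon Lia.
From Stdlib Require Import ProofIrrelevance FunctionalExtensionality PropExtensionality Classical.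
Import ListNotations.

Lemma last_nth {A} (l : list A) d : last l d = nth (length l - 1) l d.
Proof.
  induction l as [|a l IH]; [reflexivity|].
  destruct l as [|b l]; [reflexivity|].
  change (last (a :: b :: l) d) with (last (b :: l) d).
  rewrite IH. simpl. replace (length l - 0) with (length l) by lia. reflexivity.
Qed.

Lemma last_firstn {A} (p : list A) j d : j < length p ->
  last (firstn (S j) p) d = nth j p d.
Proof.
  intro H. rewrite last_nth, length_firstn, nth_firstn.
  replace (Nat.min (S j) (length p) - 1) with j by lia.
  destruct (Nat.ltb_spec j (S j)); [reflexivity| lia].
Qed.

Lemma last_In {A} (l : list A) d : l <> [] -> In (last l d) l.
Proof.
  intro H. rewrite last_nth. apply nth_In.
  destruct l; [congruence| simpl; lia].
Qed.

Lemma In_firstn {A} (l : list A) n x : In x (firstn n l) -> In x l.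
Proof.
  intro H. rewrite <- (firstn_skipn n l). apply in_or_app. auto.
Qed.

Lemma firstn_agree {A} (p q : list A) n m :
  n <= m -> firstn m p = firstn m q -> firstn n p = firstn n q.
Proof.
  intros Hn E.
  replace n with (Nat.min n m) by lia.
  rewrite <- !firstn_firstn, E. reflexivity.
Qed.

Lemma nth_agree {A} (p q : list A) m j d :
  firstn m p = firstn m q -> j < m -> nth j p d = nth j q d.
Proof.
  intros E Hj.
  assert (H := f_equal (fun l => nth j l d) E). simpl in H.
  rewrite !nth_firstn in H. destruct (Nat.ltb_spec j m); [exact H| lia].
Qed.

Lemma firstn_of_nth {A} (p q : list A) m d :
  m <= length p -> m <= length q ->
  (forall j, j < m -> nth j p d = nth j q d) -> firstn m p = firstn m q.
Proof.
  intros Hp Hq H. apply nth_ext with d d.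
  - rewrite !length_firstn. lia.
  - intros n Hn. rewrite length_firstn in Hn. rewrite !nth_firstn.
    destruct (Nat.ltb_spec n m); [apply H; lia | reflexivity].
Qed.

Lemma lcp_exists {A} (d : A) (l1 l2 : list A) m :
  m <= length l1 -> m <= length l2 -> firstn m l1 = firstn m l2 ->
  exists m', m <= m' /\ m' <= length l1 /\ m' <= length l2 /\
    firstn m' l1 = firstn m' l2 /\
    (m' = length l1 \/ m' = length l2 \/ nth m' l1 d <> nth m' l2 d).
Proof.
  remember (length l1 - m) as n eqn:En. revert m En.
  induction n as [|n IH]; intros m En H1 H2 E.
  - exists m. repeat split; auto. left; lia.
  - destruct (Nat.eq_dec m (length l2)) as [e|ne].
    + exists m. repeat split; auto; lia.
    + destruct (classic (nth m l1 d = nth m l2 d)) as [eq|neq].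
      * destruct (IH (S m)) as [m' Hm']; try lia.
        -- apply firstn_of_nth with d; try lia.
           intros j Hj. destruct (Nat.eq_dec j m); [subst; exact eq|].
           apply nth_agree with m; auto; lia.
        -- exists m'. intuition lia.
      * exists m. repeat split; auto; lia.
Qed.

Definition feqw (G : hgraph) (x y : play G) : Prop :=
  let (p, a) := x in let (q, b) := y in
  a = b /\ exists m, 1 <= m /\ m <= length p /\ m <= length q /\
    firstn m p = firstn m q /\
    (forall j, m - 1 <= j < length p -> nth j p (dE G) a) /\
    (forall j, m - 1 <= j < length q -> nth j q (dE G) a).

Lemma feq_iff G x y : feq G x y <-> feqw G x y.
Proof.
  destruct x as [p a], y as [q b]. simpl. split.
  - intros [e [m Hm]]. split; [exact e|]. exists m. intuition.
  - intros [e [m (H1 & H2 & H3 & H4 & H5 & H6)]]. split; [exact e|].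
    destruct (lcp_exists (dE G) p q m H2 H3 H4) as [m' Hm'].
    exists m'. intuition (try lia).
    + apply H5; lia.
    + apply H6; lia.
    + apply H5; lia.
    + apply H6; lia.
    + apply H5; lia.
    + apply H6; lia.
Qed.

Lemma feqw_refl G k x : valid_play G k x -> feqw G x x.
Proof.
  destruct x as [p a]. intros [[Hne _] Hl]. simpl in *.
  split; [reflexivity|]. exists (length p).
  assert (L : length p <> 0) by (destruct p; simpl; congruence).
  repeat split; try lia; intros j Hj;
  replace j with (length p - 1) by lia; rewrite <- last_nth; exact Hl.
Qed.

Lemma feqw_sym G x y : feqw G x y -> feqw G y x.
Proof.
  destruct x as [p a], y as [q b]. simpl.
  intros [e [m Hm]]. subst b. split; [reflexivity|]. exists m. intuition.
Qed.

Lemma feqw_trans G x y z : feqw G x y -> feqw G y z -> feqw G x z.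
Proof.
  destruct x as [p a], y as [q b], z as [r c]. simpl.
  intros [e1 [m1 (A1 & A2 & A3 & A4 & A5 & A6)]] [e2 [m2 (B1 & B2 & B3 & B4 & B5 & B6)]].
  subst b c. split; [reflexivity|]. exists (Nat.min m1 m2).
  repeat split; try lia.
  - rewrite (firstn_agree p q (Nat.min m1 m2) m1) by (auto; lia).
    apply firstn_agree with m2; auto; lia.
  - intros j Hj. destruct (le_lt_dec (m1 - 1) j).
    + apply A5; lia.
    + rewrite (nth_agree p q m1) by (auto; lia). apply B5; lia.
  - intros j Hj. destruct (le_lt_dec (m2 - 1) j).
    + apply B6; lia.
    + rewrite (nth_agree r q m2) by (auto; lia). apply A6; lia.
Qed.

Lemma cls_w G k x : cls G k x = fun y => valid_play G k y /\ feqw G x y.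
Proof.
  apply functional_extensionality; intro y. apply propositional_extensionality.
  unfold cls. rewrite feq_iff. tauto.
Qed.

Lemma cls_eq G k x y : feqw G x y -> cls G k x = cls G k y.
Proof.
  intro H. rewrite !cls_w. apply functional_extensionality; intro z.
  apply propositional_extensionality. split; intros [V F]; split; auto.
  - eapply feqw_trans; [apply feqw_sym, H| exact F].
  - eapply feqw_trans; [exact H| exact F].
Qed.

Lemma cls_eq_inv G k x y : valid_play G k y -> cls G k x = cls G k y -> feqw G x y.
Proof.
  intros V E. assert (H : cls G k y y) by (rewrite cls_w; split; [auto| eapply feqw_refl; eauto]).
  rewrite <- E, cls_w in H. tauto.
Qed.

Lemma Hvert_ext G k (v w : Hvert G k) : proj1_sig v = proj1_sig w -> v = w.
Proof.
  destruct v as [C HC], w as [D HD]. simpl. intro E. subst D.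
  f_equal. apply proof_irrelevance.
Qed.

Lemma mkv_eq G k x y Hx Hy : feqw G x y -> mkv G k x Hx = mkv G k y Hy.
Proof. intro H. apply Hvert_ext. simpl. apply cls_eq, H. Qed.

Lemma mkv_eq' G k x y Hx Hy : x = y -> mkv G k x Hx = mkv G k y Hy.
Proof. intro E. subst y. f_equal. apply proof_irrelevance. Qed.

Lemma Hvert_mkv G k (v : Hvert G k) : exists x Hx, v = mkv G k x Hx.
Proof.
  destruct v as [C [x [Hx E]]]. exists x, Hx. apply Hvert_ext. simpl. exact E.
Qed.

Lemma vrepr_spec k G (v : hV (Hk k G)) :
  valid_play G k (vrepr k G v) /\ proj1_sig v = cls G k (vrepr k G v).
Proof.
  unfold vrepr. destruct constructive_indefinite_description as [z Hz]. simpl. exact Hz.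
Qed.

Lemma eps_cls k G (v : hV (Hk k G)) y :
  valid_play G k y -> proj1_sig v = cls G k y -> eps k G v = snd y.
Proof.
  intros V E. unfold eps. destruct (vrepr_spec k G v) as [Vz Ez].
  rewrite Ez in E. apply cls_eq_inv in E; auto.
  destruct (vrepr k G v) as [q b], y as [p a]. simpl in *. destruct E as [E _]. exact E.
Qed.

Lemma eps_mkv k G x Hx : eps k G (mkv G k x Hx) = snd x.
Proof. apply eps_cls; auto. Qed.

Lemma img_list {A B} (P : A -> Prop) (f : forall a, P a -> B) (l : list A) :
  exists l' : list B, length l' <= length l /\
    forall y, (exists a (H : P a), In a l /\ y = f a H) <-> In y l'.
Proof.
  induction l as [|a l [l' [Hlen IH]]].
  - exists []. split; [simpl; lia|]. intro y. split; [intros (a & H & [] & _) | intros []].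
  - destruct (classic (P a)) as [Ha|Ha].
    + exists (f a Ha :: l'). split; [simpl; lia|]. intro y. split.
      * intros (a0 & H0 & [e|i] & E).
        -- subst a0. left. subst y. f_equal. apply proof_irrelevance.
        -- right. apply IH. eauto.
      * intros [e|i].
        -- exists a, Ha. split; [left; auto| auto].
        -- apply IH in i. destruct i as (a0 & H0 & i & E). exists a0, H0. split; [right|]; auto.
    + exists l'. split; [simpl; lia|]. intro y. split.
      * intros (a0 & H0 & [e|i] & E).
        -- subst a0. contradiction.
        -- apply IH. eauto.
      * intro i. apply IH in i. destruct i as (a0 & H0 & i & E). exists a0, H0. split; [right|]; auto.
Qed.
Definition ent (k : nat) (G G' : hgraph) (h : hV (Hk k G) -> hV G')
  (q : list (hV G -> Prop)) : hV G' -> Prop :=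
  fun y => exists b (Hb : valid_play G k (q, b)), y = h (mkv G k (q, b) Hb).

Lemma length_lift k G G' h p : length (lift_list k G G' h p) = length p.
Proof. unfold lift_list. rewrite length_map, length_seq. reflexivity. Qed.

Lemma nth_lift k G G' h p j : j < length p ->
  nth j (lift_list k G G' h p) (dE G') = ent k G G' h (firstn (S j) p).
Proof.
  intro Hj. unfold lift_list.
  set (F := fun j0 : nat => fun y : hV G' =>
         exists b (Hb : valid_play G k (firstn (S j0) p, b)),
           nth j0 p (dE G) b /\ y = h (mkv G k _ Hb)).
  rewrite (nth_indep _ (dE G') (F 0)) by (rewrite length_map, length_seq; lia).
  rewrite map_nth, seq_nth by lia. simpl. unfold F, ent.
  apply functional_extensionality; intro y. apply propositional_extensionality.
  split.
  - intros (b & Hb & _ & E). exists b, Hb. exact E.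
  - intros (b & Hb & E). exists b, Hb. split; [|exact E].
    rewrite <- last_firstn by exact Hj. apply Hb.
Qed.

Lemma valid_firstn G k p j : valid_list G k p -> j < length p ->
  valid_list G k (firstn (S j) p).
Proof.
  intros [Hne HU] Hj. split.
  - intro E. assert (L := f_equal (@length _) E). rewrite length_firstn in L. change (length (@nil (hV G -> Prop))) with 0 in L. lia.
  - intros U HI. apply HU. exact (In_firstn p (S j) U HI).
Qed.

Lemma ent_hom k G G' h q : is_hom (Hk k G) G' h -> valid_list G k q ->
  hE G' (ent k G G' h q).
Proof.
  intros Hh Vq.
  set (S := fun v : Hvert G k => exists a, last q (dE G) a /\ proj1_sig v = cls G k (q, a)).
  assert (E : ent k G G' h q = image h S).
  { apply functional_extensionality; intro y. apply propositional_extensionality. split.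
    - intros (b & Hb & E). exists (mkv G k (q, b) Hb). split; [|auto].
      exists b. split; [apply Hb| reflexivity].
    - intros (v & (a & la & Ev) & E). exists a, (conj Vq la). rewrite <- E. f_equal.
      apply Hvert_ext. exact Ev. }
  rewrite E. apply Hh. exists q. split; [exact Vq| reflexivity].
Qed.

Lemma ent_atmost k G G' h q : valid_list G k q -> atmost k (ent k G G' h q).
Proof.
  intros Vq. destruct Vq as [Hne HU] eqn:EV.
  destruct (HU _ (last_In q (dE G) Hne)) as [_ [l [Hl Hiff]]].
  destruct (img_list (fun b => valid_play G k (q, b)) (fun b Hb => h (mkv G k (q, b) Hb)) l)
    as [l' [Hl' Hiff']].
  exists l'. split; [lia|]. intro y. rewrite <- Hiff'. unfold ent. split.
  - intros (b & Hb & E). exists b, Hb. split; auto. apply Hiff, Hb.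
  - intros (b & Hb & _ & E). eauto.
Qed.

Lemma valid_lift_list k G G' h p : is_hom (Hk k G) G' h -> valid_list G k p ->
  valid_list G' k (lift_list k G G' h p).
Proof.
  intros Hh Vp. split.
  - intro E. assert (L := f_equal (@length _) E). rewrite length_lift in L.
    destruct Vp as [Hne _]. destruct p; simpl in L; congruence.
  - intros U HI. destruct (In_nth _ _ (dE G') HI) as [j [Hj E]].
    rewrite length_lift in Hj. rewrite nth_lift in E by exact Hj. subst U.
    split; [apply ent_hom| apply ent_atmost]; auto; apply valid_firstn; auto.
Qed.

Lemma last_lift k G G' h p : p <> [] ->
  last (lift_list k G G' h p) (dE G') = ent k G G' h p.
Proof.
  intro Hne. rewrite last_nth, length_lift, nth_lift.
  - replace (S (length p - 1)) with (length p). rewrite firstn_all. reflexivity.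
    destruct p; [congruence| simpl; lia].
  - destruct p; [congruence| simpl; lia].
Qed.

Lemma valid_lift k G G' h x Hx : is_hom (Hk k G) G' h ->
  valid_play G' k (lift k G G' h x Hx).
Proof.
  intro Hh. destruct x as [p a]. split.
  - apply valid_lift_list; auto. apply Hx.
  - simpl. rewrite last_lift by apply Hx. exists a, Hx. reflexivity.
Qed.

Lemma firstn_lift k G G' h p n :
  firstn n (lift_list k G G' h p) = lift_list k G G' h (firstn n p).
Proof.
  apply nth_ext with (dE G') (dE G').
  - rewrite length_firstn, !length_lift, length_firstn. reflexivity.
  - intros i Hi. rewrite length_firstn, length_lift in Hi.
    rewrite nth_firstn. destruct (Nat.ltb_spec i n); [|lia].
    rewrite !nth_lift by (try rewrite length_firstn; lia).
    rewrite firstn_firstn. f_equal. f_equal. lia.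
Qed.

Lemma feqw_prefix G p a j : j < length p ->
  (forall i, j <= i < length p -> nth i p (dE G) a) ->
  feqw G (p, a) (firstn (S j) p, a).
Proof.
  intros Hj H. unfold feqw; cbv beta iota. split; [reflexivity|]. exists (S j).
  rewrite ?length_firstn. repeat split; try lia.
  - rewrite firstn_firstn. f_equal. lia.
  - intros i Hi. apply H. lia.
  - intros i Hi. rewrite nth_firstn. destruct (Nat.ltb_spec i (S j)); [|lia].
    apply H. lia.
Qed.

Lemma in_ent_last k G G' h p a Hx j : j < length p ->
  (forall i, j <= i < length p -> nth i p (dE G) a) ->
  ent k G G' h (firstn (S j) p) (h (mkv G k (p, a) Hx)).
Proof.
  intros Hj H.
  assert (Hb : valid_play G k (firstn (S j) p, a)).
  { split; [apply valid_firstn; auto; apply Hx|].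
    change (last (firstn (S j) p) (dE G) a). rewrite last_firstn by exact Hj. apply H. lia. }
  exists a, Hb. f_equal. apply mkv_eq. apply feqw_prefix; auto.
Qed.

Lemma lift_feqw k G G' h x y Hx Hy : feqw G x y ->
  feqw G' (lift k G G' h x Hx) (lift k G G' h y Hy).
Proof.
  intro F. assert (Ehx : h (mkv G k x Hx) = h (mkv G k y Hy)) by (f_equal; apply mkv_eq; auto).
  destruct x as [p a], y as [q b]. simpl in F.
  destruct F as [e [m (H1 & H2 & H3 & H4 & H5 & H6)]]. subst b.
  unfold lift, feqw; cbv beta iota; cbn [fst snd]. split; [exact Ehx|]. exists m.
  rewrite !length_lift. repeat split; try lia.
  - rewrite !firstn_lift, H4. reflexivity.
  - intros j Hj. rewrite nth_lift by lia. apply in_ent_last; [lia|].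
    intros i Hi. apply H5. lia.
  - intros j Hj. rewrite nth_lift by lia. rewrite Ehx. apply in_ent_last; [lia|].
    intros i Hi. apply H6. lia.
Qed.

Lemma hs_mkv k G G' h hs x Hx (Hh : is_hom (Hk k G) G' h) :
  coext_spec k G G' h hs ->
  hs (mkv G k x Hx) = mkv G' k (lift k G G' h x Hx) (valid_lift k G G' h x Hx Hh).
Proof. intro C. apply Hvert_ext. rewrite C. reflexivity. Qed.

Lemma coext_hom k G G' h hs : is_hom (Hk k G) G' h -> coext_spec k G G' h hs ->
  is_hom (Hk k G) (Hk k G') hs.
Proof.
  intros Hh C S [p [Vp ES]]. subst S.
  exists (lift_list k G G' h p). split; [apply valid_lift_list; auto|].
  apply functional_extensionality; intro w. apply propositional_extensionality. split.
  - intros (v & (a & la & Ev) & E).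
    assert (Hx : valid_play G k (p, a)) by (split; auto).
    assert (v = mkv G k (p, a) Hx) by (apply Hvert_ext; exact Ev). subst v w.
    exists (h (mkv G k (p, a) Hx)). split.
    + exact (proj2 (valid_lift k G G' h (p, a) Hx Hh)).
    + rewrite C. reflexivity.
  - intros (a' & la' & E). rewrite last_lift in la' by apply Vp.
    destruct la' as (b & Hb & e). subst a'.
    exists (mkv G k (p, b) Hb). split.
    + exists b. split; [apply Hb| reflexivity].
    + apply Hvert_ext. rewrite C, E. reflexivity.
Qed.

Lemma lift_eps k G p : valid_list G k p -> lift_list k G G (eps k G) p = p.
Proof.
  intro Vp. apply nth_ext with (dE G) (dE G); [apply length_lift|].
  intros j Hj. rewrite length_lift in Hj. rewrite nth_lift by exact Hj.
  apply functional_extensionality; intro y. apply propositional_extensionality. split.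
  - intros (b & Hb & E). rewrite eps_mkv in E. simpl in E. subst y.
    rewrite <- last_firstn by exact Hj. apply Hb.
  - intro Hy. assert (Hb : valid_play G k (firstn (S j) p, y)).
    { split; [apply valid_firstn; auto|]. change (last (firstn (S j) p) (dE G) y).
      rewrite last_firstn by exact Hj. exact Hy. }
    exists y, Hb. rewrite eps_mkv. reflexivity.
Qed.

Lemma ent_comp k G G' G'' h g hs q (Hh : is_hom (Hk k G) G' h) :
  coext_spec k G G' h hs -> valid_list G k q ->
  ent k G G'' (fun v => g (hs v)) q = ent k G' G'' g (lift_list k G G' h q).
Proof.
  intros C Vq.
  apply functional_extensionality; intro y. apply propositional_extensionality. split.
  - intros (b & Hb & E).
    exists (h (mkv G k (q, b) Hb)), (valid_lift k G G' h (q, b) Hb Hh).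
    rewrite E. f_equal. apply (hs_mkv k G G' h hs (q, b) Hb Hh C).
  - intros (c & Hc & E).
    pose proof (proj2 Hc) as lc. simpl in lc. rewrite last_lift in lc by apply Vq.
    destruct lc as (b & Hb & e). subst c.
    exists b, Hb. rewrite E. f_equal. rewrite (hs_mkv k G G' h hs (q, b) Hb Hh C).
    apply mkv_eq'. reflexivity.
Qed.

Theorem theorem6p2 (k : nat) (hk : 0 < k) :
  (* H_k(G) is an object of HGraph *)
  (forall G : hgraph, finite_edges G -> finite_edges (Hk k G)) /\
  (* the counit is a morphism *)
  (forall G : hgraph, finite_edges G -> is_hom (Hk k G) G (eps k G)) /\
  (* the coextension h^* is well defined and a morphism *)
  (forall (G G' : hgraph) (h : hV (Hk k G) -> hV G'),
      finite_edges G -> finite_edges G' -> is_hom (Hk k G) G' h ->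
      exists hs : hV (Hk k G) -> hV (Hk k G'),
        coext_spec k G G' h hs /\ is_hom (Hk k G) (Hk k G') hs) /\
  (* law 1: eps^* = id *)
  (forall (G : hgraph) (es : hV (Hk k G) -> hV (Hk k G)),
      finite_edges G -> coext_spec k G G (eps k G) es -> forall v, es v = v) /\
  (* law 2: eps o h^* = h *)
  (forall (G G' : hgraph) (h : hV (Hk k G) -> hV G')
          (hs : hV (Hk k G) -> hV (Hk k G')),
      finite_edges G -> finite_edges G' -> is_hom (Hk k G) G' h ->
      coext_spec k G G' h hs -> forall v, eps k G' (hs v) = h v) /\
  (* law 3: (g o h^* )^* = g^* o h^* *)
  (forall (G G' G'' : hgraph) (h : hV (Hk k G) -> hV G')
          (g : hV (Hk k G') -> hV G'')
          (hs : hV (Hk k G) -> hV (Hk k G'))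
          (gs : hV (Hk k G') -> hV (Hk k G''))
          (ghs : hV (Hk k G) -> hV (Hk k G'')),
      finite_edges G -> finite_edges G' -> finite_edges G'' ->
      is_hom (Hk k G) G' h -> is_hom (Hk k G') G'' g ->
      coext_spec k G G' h hs -> coext_spec k G' G'' g gs ->
      coext_spec k G G'' (fun v => g (hs v)) ghs ->
      forall v, ghs v = gs (hs v)).
Proof.
  split; [|split; [|split; [|split; [|split]]]].
  -
    intros G _ S [p [Vp ES]]. subst S.
    destruct Vp as [Hne HU] eqn:EV.
    destruct (HU _ (last_In p (dE G) Hne)) as [_ [l [_ Hiff]]].
    destruct (img_list (fun a => valid_play G k (p, a)) (fun a Ha => mkv G k (p, a) Ha) l)
      as [l' [_ Hiff']].
    exists l'. intro v. rewrite <- Hiff'. split.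
    + intros (a & la & E). exists a, (conj Vp la). split; [apply Hiff, la|].
      apply Hvert_ext. exact E.
    + intros (a & Ha & _ & E). subst v. exists a. split; [apply Ha| reflexivity].
  -
    intros G _ S [p [Vp ES]]. subst S.
    assert (E : image (eps k G) (fun v : Hvert G k => exists a, last p (dE G) a /\
                 proj1_sig v = cls G k (p, a)) = last p (dE G)).
    { apply functional_extensionality; intro y. apply propositional_extensionality. split.
      - intros (v & (a & la & Ev) & E). rewrite (eps_cls k G v (p, a)) in E.
        + simpl in E. subst y. exact la.
        + split; auto.
        + exact Ev.
      - intro ly. exists (mkv G k (p, y) (conj Vp ly)). split.
        + exists y. split; [exact ly| reflexivity].
        + rewrite eps_mkv. reflexivity. }
    enough (H0 : hE G (last p (dE G))) by (rewrite <- E in H0; exact H0).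
    destruct Vp as [Hne HU]. apply HU, last_In, Hne.
  -
    intros G G' h _ _ Hh.
    set (hs := fun v : hV (Hk k G) =>
      mkv G' k (lift k G G' h (vrepr k G v) (proj1 (vrepr_spec k G v)))
        (valid_lift k G G' h _ (proj1 (vrepr_spec k G v)) Hh)).
    assert (C : coext_spec k G G' h hs).
    { intros x Hx. unfold hs. simpl. apply cls_eq. apply lift_feqw.
      destruct (vrepr_spec k G (mkv G k x Hx)) as [Vz Ez].
      simpl in Ez. symmetry in Ez. apply cls_eq_inv in Ez; auto. }
    exists hs. split; [exact C|]. apply coext_hom with h; auto.
  -
    intros G es _ C v. destruct (Hvert_mkv G k v) as [x [Hx ->]].
    apply Hvert_ext. rewrite C. simpl. f_equal.
    destruct x as [p a]. unfold lift. rewrite eps_mkv. simpl.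
    rewrite lift_eps by apply Hx. reflexivity.
  -
    intros G G' h hs _ _ Hh C v. destruct (Hvert_mkv G k v) as [x [Hx ->]].
    rewrite (eps_cls k G' _ (lift k G G' h x Hx)).
    + reflexivity.
    + apply valid_lift, Hh.
    + apply C.
  -
    intros G G' G'' h g hs gs ghs _ _ _ Hh Hg Ch Cg Cgh v.
    destruct (Hvert_mkv G k v) as [x [Hx ->]].
    apply Hvert_ext. rewrite Cgh.
    rewrite (hs_mkv k G G' h hs x Hx Hh Ch). rewrite Cg. f_equal.
    destruct x as [p a]. unfold lift. simpl. f_equal.
    + apply nth_ext with (dE G'') (dE G''); [rewrite !length_lift; reflexivity|].
      intros j Hj. rewrite length_lift in Hj.
      rewrite nth_lift by exact Hj. rewrite nth_lift by (rewrite length_lift; exact Hj).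
      rewrite firstn_lift. apply ent_comp; auto. apply valid_firstn; auto. apply Hx.
    + rewrite (hs_mkv k G G' h hs (p, a) Hx Hh Ch). reflexivity.
Qed.
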